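(* Let $G=C(n;\{1,2,\dots,k\})$, where $n\geq 4$ and $1\leq k<\lfloor n/2\rfloor$. Then $G$ is a hypo-unique domination graph if and only if $2k+1$ divides $n-1$. If $2k+1$ divides $n-1$, then $n=|V(G)|=(\Delta(G)+1)(\gamma(G)-1)+1$ and $G$ is a hypo-efficient domination graph.
   Context: All graphs are finite, simple and undirected. The circulant graph $C(n;\{1,\dots,k\})$ has vertex set $\{0,1,\dots,n-1\}$, with $i$ adjacent to $i\pm 1,\dots,i\pm k \pmod n$. For $v\in V(G)$, $N[v]$ is the closed neighborhood of $v$. A set $D\subseteq V(G)$ is dominating if every vertex of $G$ not in $D$ has a neighbor in $D$; $\gamma(G)$ is the minimum size of a dominating set, and a dominating set of size $\gamma(G)$ is a $\gamma$-set. A set $D\subseteq V(H)$ is an efficient dominating set (EDS) of $H$ if $|N_H[v]\cap D|=1$ for every $v\in V(H)$. $G$ is a hypo-efficient domination graph if $G$ has no EDS but $G-v$ has at least one EDS for every $v\in V(G)$. $G$ is a hypo-unique domination graph if $G$ has at least two $\gamma$-sets but $G-v$ has exactly one $\gamma$-set for every $v\in V(G)$. $\Delta(G)$ is the maximum degree. *)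

(* Defs.v *)
(* Graphs: a finite simple graph is a symmetric irreflexive
   relation [e : rel T] on a finType [T]; a (sub)graph is given by a vertex set
   [V : {set T}] together with the restriction of [e] to [V] (induced subgraph).
   Thus G - v is the induced subgraph on [V :\ v]. *)
From mathcomp Require Import all_boot.
Set Implicit Arguments. Unset Strict Implicit. Unset Printing Implicit Defensive.

Section Graphs.
Variables (T : finType) (e : rel T).

Definition cnbhd (V : {set T}) (v : T) : {set T} :=
  [set u in V | (u == v) || e v u].

Definition onbhd (V : {set T}) (v : T) : {set T} :=
  [set u in V | (u != v) && e v u].

Definition dominating (V D : {set T}) : bool :=
  (D \subset V) &&
  [forall v in V, (v \in D) || [exists u in D, e v u]].

(* domination number gamma (the family of dominating sets of V is nonempty:
   V itself dominates; #|T| is just an upper bound for the min) *)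
Definition gamma (V : {set T}) : nat :=
  \big[minn/#|T|]_(D : {set T} | dominating V D) #|D|.

Definition gamma_set (V D : {set T}) : bool :=
  dominating V D && (#|D| == gamma V).

Definition gamma_sets (V : {set T}) : {set {set T}} :=
  [set D | gamma_set V D].

Definition efficient_dominating (V D : {set T}) : bool :=
  (D \subset V) && [forall v in V, #|cnbhd V v :&: D| == 1].

Definition has_EDS (V : {set T}) : bool :=
  [exists D : {set T}, efficient_dominating V D].

Definition hypo_efficient (V : {set T}) : Prop :=
  ~~ has_EDS V /\ (forall v, v \in V -> has_EDS (V :\ v)).

Definition hypo_unique (V : {set T}) : Prop :=
  2 <= #|gamma_sets V| /\ (forall v, v \in V -> #|gamma_sets (V :\ v)| = 1).

Definition maxdeg (V : {set T}) : nat := \max_(v in V) #|onbhd V v|.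

End Graphs.

(* circulant graph C(n; {1,...,k}) on vertex set 'I_n:
   i ~ j iff (i - j) mod n lies in {1..k} or in {n-k..n-1} *)
Definition circ_adj (n k : nat) : rel 'I_n :=
  fun i j => let d := (i + n - j) %% n in (0 < d) && ((d <= k) || (n - k <= d)).
Arguments circ_adj : clear implicits.

(* Main.v *)
Require Import Defs.
From mathcomp Require Import all_boot.
From mathcomp Require Import zify.
Set Implicit Arguments. Unset Strict Implicit. Unset Printing Implicit Defensive.

Lemma modn_split a n : 0 < n -> a < 3 * n ->
  (a < n /\ a %% n = a) \/ ((n <= a < 2 * n) /\ a %% n = a - n) \/ (2 * n <= a /\ a %% n = a - 2 * n).
Proof.
move=> n0 an.
have e := divn_eq a n. have r := ltn_pmod a n0.
have : a %/ n < 3 by rewrite ltn_divLR //.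
case: (a %/ n) e => [|[|[|q]]] e q3 //; lia.
Qed.

Lemma modn_split2 a n : 0 < n -> a < 2 * n ->
  (a < n /\ a %% n = a) \/ ((n <= a < 2 * n) /\ a %% n = a - n).
Proof.
move=> n0 an; have := @modn_split a n n0 ltac:(lia); lia.
Qed.

Ltac msplit :=
  repeat match goal with
  | |- context [?a %% ?n] =>
     lazymatch a with context [_ %% _] => fail | _ =>
     let H := fresh "H" in
     first [
     have H := @modn_split2 a n ltac:(lia) ltac:(lia);
     let h1 := fresh "h" in
     destruct H as [[h1 ->]|[h1 ->]]
     |
     have H := @modn_split a n ltac:(lia) ltac:(lia);
     let h1 := fresh "h" in
     destruct H as [[h1 ->]|[[h1 ->]|[h1 ->]]] ] end
  end.

Section Circ.
Variables n k : nat.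
Hypothesis hk : 1 <= k.
Hypothesis hkn : k + k + 2 <= n.

Lemma n_gt0 : 0 < n. Proof. lia. Qed.

Definition ofs (v x : 'I_n) : nat := (x + n - v) %% n.
Definition fromofs (v : 'I_n) (t : nat) : 'I_n := Ordinal (ltn_pmod (v + t) n_gt0).
Definition cl (x y : 'I_n) : bool := (y == x) || circ_adj n k x y.
Definition cdk (a b : nat) : bool :=
  ((a <= b + k) && (b <= a + k)) || (a + n <= b + k) || (b + n <= a + k).

Lemma ofs_lt v x : ofs v x < n. Proof. exact: ltn_pmod n_gt0. Qed.



Lemma ofs_from v t : t < n -> ofs v (fromofs v t) = t.
Proof.
rewrite /ofs /=; have := ltn_ord v; move: (val v) => a ha ht; msplit; lia.
Qed.

Lemma from_ofs v x : fromofs v (ofs v x) = x.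
Proof.
apply/val_inj; rewrite /ofs /=; have := ltn_ord v; have := ltn_ord x.
move: (val v) (val x) => a b ha hb; msplit; lia.
Qed.

Lemma ofs_self v : ofs v v = 0.
Proof. by rewrite /ofs addKn modnn. Qed.

Lemma ofs_inj v x y : ofs v x = ofs v y -> x = y.
Proof. by move=> e; rewrite -(from_ofs v x) e from_ofs. Qed.

Lemma dd_ofs v (x y : 'I_n) : (x + n - y) %% n = (ofs v x + n - ofs v y) %% n.
Proof.
rewrite /ofs; have := ltn_ord x; have := ltn_ord y; have := ltn_ord v.
move: (val x) (val y) (val v) => a b c ha hb hc.
msplit; lia.
Qed.

Lemma cl_ofs v x y : cl x y = cdk (ofs v x) (ofs v y).
Proof.
have e : (y == x) = (ofs v x == ofs v y).
  by apply/eqP/eqP => [->//|h]; rewrite (ofs_inj h).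
rewrite /cl e /circ_adj /cdk (dd_ofs v); have := ofs_lt v x; have := ofs_lt v y.
move: (ofs v x) (ofs v y) => a b ha hb.
msplit; lia.
Qed.
Lemma cdk_sym a b : cdk a b = cdk b a.
Proof. rewrite /cdk; lia. Qed.

Lemma cl_sym x y : cl x y = cl y x.
Proof. by rewrite (cl_ofs x) (cl_ofs x y) cdk_sym. Qed.

Lemma cl_refl x : cl x x.
Proof. by rewrite /cl eqxx. Qed.

Definition N (u : 'I_n) := [set y | cl u y].

Lemma card_N u : #|N u| = k + k + 1.
Proof.
pose h (j : 'I_(k + k + 1)) := fromofs u ((j + n - k) %% n).
have hinj : injective h.
  move=> i j /(congr1 val) /=; have := ltn_ord i; have := ltn_ord j; have := ltn_ord u.
  move=> hu hj hi e; apply/val_inj => /=; move: e; msplit; lia.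
have -> : N u = [set h j | j in 'I_(k + k + 1)].
  apply/setP => y; rewrite inE; apply/idP/imsetP.
    rewrite (cl_ofs u) ofs_self => c.
    have hl : (ofs u y + k) %% n < k + k + 1.
      move: c; rewrite /cdk; have := ofs_lt u y; move: (ofs u y) => t ht; msplit; lia.
    exists (Ordinal hl) => //; rewrite /h; apply/val_inj => /=.
    move: hl c; rewrite /cdk /ofs; have := ltn_ord y; have := ltn_ord u; move: (val y) (val u) => b a ha hb.
    msplit; lia.
  case=> j _ ->; rewrite (cl_ofs u) ofs_self /h ofs_from; last exact: ltn_pmod _ (n_gt0).
  rewrite /cdk; have := ltn_ord j; move: (val j) => b hb; msplit; lia.
by rewrite card_imset // card_ord.
Qed.

Notation p := (k + k + 1).
Notation dom := (dominating (circ_adj n k)).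

Lemma card_sum (D : {set 'I_n}) (P : pred 'I_n) : #|[set u in D | P u]| = \sum_(u in D) P u.
Proof.
rewrite -sum1_card (big_mkcond (fun u => u \in _)) [RHS]big_mkcond /=.
apply: eq_bigr => u _; rewrite inE; by case: (u \in D); case: (P u).
Qed.

Lemma dcount (V D : {set 'I_n}) : \sum_(x in V) #|[set u in D | cl x u]| = \sum_(u in D) #|[set x in V | cl u x]|.
Proof.
under eq_bigr do rewrite card_sum.
rewrite exchange_big; apply: eq_bigr => u _; rewrite card_sum; apply: eq_bigr => x _.
by rewrite cl_sym.
Qed.

Lemma card_NV (V : {set 'I_n}) u : #|[set x in V | cl u x]| <= p.
Proof.
rewrite -(card_N u); apply: subset_leq_card; apply/subsetP => x; rewrite !inE; by case/andP.
Qed.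

Lemma domP (V D : {set 'I_n}) : dom V D -> D \subset V /\ forall x, x \in V -> 0 < #|[set u in D | cl x u]|.
Proof.
case/andP=> sDV /forall_inP H; split => // x /H /orP [xD|/exists_inP [u uD xu]].
  by apply/card_gt0P; exists x; rewrite inE xD cl_refl.
by apply/card_gt0P; exists u; rewrite inE uD /cl xu orbT.
Qed.

Lemma domI (V D : {set 'I_n}) : D \subset V -> (forall x, x \in V -> exists2 u, u \in D & cl x u) -> dom V D.
Proof.
move=> sDV H; apply/andP; split => //; apply/forall_inP => x /H [u uD].
rewrite /cl => /orP [/eqP <-|xu]; first by rewrite uD.
by apply/orP; right; apply/exists_inP; exists u.
Qed.

Lemma lower (V D : {set 'I_n}) : dom V D -> #|V| <= #|D| * p.
Proof.
case/domP => _ H.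
rewrite -sum1_card -sum_nat_const.
have h1 : \sum_(x in V) 1 <= \sum_(x in V) #|[set u in D | cl x u]| by apply: leq_sum.
apply: (leq_trans h1); rewrite dcount; apply: leq_sum => u _; exact: card_NV.
Qed.

Lemma tight (V D : {set 'I_n}) : dom V D -> #|V| = #|D| * p ->
  (forall x, x \in V -> #|[set u in D | cl x u]| = 1) /\
  (forall u, u \in D -> #|[set x in V | cl u x]| = p).
Proof.
case/domP => _ H e.
have L1 := @leqif_sum _ (mem V) (fun x => 1 == #|[set u in D | cl x u]|) (fun _ => 1)
  (fun x => #|[set u in D | cl x u]|) (fun x xV => conj (H x xV) erefl).
have L2 := @leqif_sum _ (mem D) (fun u => #|[set x in V | cl u x]| == p)
  (fun u => #|[set x in V | cl u x]|) (fun _ => p) (fun u _ => conj (card_NV V u) erefl).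
have s1 : \sum_(x in V) 1 = #|V| by rewrite sum1_card.
have s2 : \sum_(u in D) p = #|V| by rewrite sum_nat_const e.
have a1 := L1.1; have a2 := L2.1; rewrite dcount in a1.
have eq1 : \sum_(x in V) 1 == \sum_(x in V) #|[set u in D | cl x u]|.
  by rewrite eqn_leq L1.1 dcount s1 -s2 L2.1.
have eq2 : \sum_(u in D) #|[set x in V | cl u x]| == \sum_(u in D) p.
  by rewrite eqn_leq L2.1 s2 -s1 -dcount L1.1.
rewrite L1.2 in eq1; rewrite L2.2 in eq2.
split.
  by move=> x xV; move/forall_inP: eq1 => /(_ x xV) /eqP <-.
by move=> u uD; move/forall_inP: eq2 => /(_ u uD) /eqP.
Qed.

Lemma bigmin_le (r : seq {set 'I_n}) (P : pred {set 'I_n}) (F : {set 'I_n} -> nat) x D0 :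
  D0 \in r -> P D0 -> \big[minn/x]_(i <- r | P i) F i <= F D0.
Proof.
elim: r => // a r IH; rewrite inE big_cons => /orP [/eqP <- ->|/IH H /H {}H].
  exact: geq_minl.
case: (P a) => //; exact: leq_trans (geq_minr _ _) H.
Qed.

Lemma gammaE (V D0 : {set 'I_n}) g : dom V D0 -> #|D0| = g ->
  (forall D, dom V D -> g <= #|D|) -> gamma (circ_adj n k) V = g.
Proof.
move=> d0 c0 H; apply/eqP; rewrite eqn_leq; apply/andP; split.
  rewrite -c0 /gamma; apply: bigmin_le => //; exact: mem_index_enum.
rewrite /gamma; apply: (big_ind (fun x => g <= x)).
- by rewrite -c0 max_card.
- by move=> x y hx hy; rewrite leq_min hx hy.
- exact: H.
Qed.

Lemma gsetE (V : {set 'I_n}) D : gamma_set (circ_adj n k) V D = dom V D && (#|D| == gamma (circ_adj n k) V).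
Proof. by []. Qed.

Lemma gsets1 (V S : {set 'I_n}) : dom V S -> (forall D, dom V D -> #|S| <= #|D|) ->
  (forall D, dom V D -> #|D| = #|S| -> D = S) -> #|gamma_sets (circ_adj n k) V| = 1.
Proof.
move=> dS H U; have g := gammaE dS erefl H.
have -> : gamma_sets (circ_adj n k) V = [set S]; last exact: cards1.
apply/setP => D; rewrite !inE gsetE g; apply/idP/eqP.
  by case/andP => dD /eqP /(U _ dD).
by move=> ->; rewrite dS eqxx.
Qed.

Lemma gsets2 (V A B : {set 'I_n}) g : dom V A -> dom V B -> #|A| = g -> #|B| = g -> A != B ->
  (forall D, dom V D -> g <= #|D|) -> 2 <= #|gamma_sets (circ_adj n k) V|.
Proof.
move=> dA dB cA cB AB H; have gg := gammaE dA cA H.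
have <- : #|[set A; B]| = 2 by rewrite cards2 AB.
apply: subset_leq_card; apply/subsetP => D; rewrite !inE gsetE gg.
by case/orP => /eqP ->; rewrite ?dA ?dB ?cA ?cB eqxx.
Qed.

Lemma maxdegE : maxdeg (circ_adj n k) [set: 'I_n] = k + k.
Proof.
have c : forall v, #|onbhd (circ_adj n k) [set: 'I_n] v| = k + k.
  move=> v; have -> : onbhd (circ_adj n k) [set: 'I_n] v = N v :\ v.
    apply/setP => u; rewrite !inE /cl; by case: (u == v).
  by have := cardsD1 v (N v); rewrite card_N !inE cl_refl; lia.
apply/eqP; rewrite eqn_leq; apply/andP; split.
  by apply/bigmax_leqP => v _; rewrite c.
by rewrite -(c (Ordinal n_gt0)); apply: (leq_bigmax_cond (Ordinal n_gt0)); rewrite inE.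
Qed.

Definition Sset v (m : nat) := [set fromofs v (k.+1 + (j : 'I_m) * p) | j in 'I_m].

Lemma S_card v (m : nat) : #|Sset v m| <= m.
Proof. by rewrite -{2}(card_ord m); apply: leq_imset_card. Qed.

Lemma jp_bound j m : j < m -> j * p + p <= m * p.
Proof. by move=> jm; rewrite addnC -mulSn leq_mul2r jm orbT. Qed.

Lemma S_mem v (m j : nat) : m * p <= n - 1 -> j < m ->
  fromofs v (k.+1 + j * p) \in Sset v m /\ ofs v (fromofs v (k.+1 + j * p)) = k.+1 + j * p.
Proof.
move=> mp jm; split; first by apply/imsetP; exists (Ordinal jm).
apply: ofs_from; have := jp_bound jm; move: (j * p) (m * p) mp => X M; lia.
Qed.

Lemma S_ofs v (m : nat) x : m * p <= n - 1 -> x \in Sset v m ->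
  exists j, [/\ j < m, ofs v x = k.+1 + j * p & j * p + p <= m * p].
Proof.
move=> mp /imsetP [j _ ->]; exists j; have [_ ->] := S_mem v mp (ltn_ord j).
by split => //; apply: jp_bound.
Qed.

Lemma S_sub v (m : nat) : m * p <= n - 1 -> Sset v m \subset [set: 'I_n] :\ v.
Proof.
move=> mp; apply/subsetP => x xS; rewrite !inE andbT; apply/eqP => xv.
have [j [_ e b]] := S_ofs mp xS; move: e; rewrite xv ofs_self.
move: (j * p) (m * p) b mp => X M; lia.
Qed.

Lemma S_cover v (m : nat) x : m * p <= n - 1 -> 0 < ofs v x <= m * p -> exists2 u, u \in Sset v m & cl x u.
Proof.
move=> mp ht; set t := ofs v x in ht.
have e := divn_eq t.-1 p; have r : t.-1 %% p < p by apply: ltn_pmod; rewrite addn1.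
have jm : t.-1 %/ p < m.
  rewrite ltnNge; apply/negP => mj; have := leq_mul mj (leqnn p).
  move: (t.-1 %/ p * p) (m * p) e ht => X M; lia.
have [uS uo] := S_mem v mp jm; exists (fromofs v (k.+1 + t.-1 %/ p * p)) => //.
rewrite (cl_ofs v) uo -/t /cdk.
have := jp_bound jm; move: (t.-1 %/ p * p) (m * p) e ht mp => X M; lia.
Qed.

Lemma card_Vv v : #|[set: 'I_n] :\ v| = n - 1.
Proof. by have := cardsD1 v [set: 'I_n]; rewrite cardsT card_ord inE; lia. Qed.

Lemma ofs_pos v x : x \in [set: 'I_n] :\ v -> 0 < ofs v x.
Proof.
rewrite !inE andbT => xv; rewrite lt0n; apply/eqP => e.
by move/eqP: xv; apply; apply: (@ofs_inj v); rewrite e ofs_self.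
Qed.

Lemma ofs0 v x : ofs v x = 0 -> x = v.
Proof. by move=> e; apply: (@ofs_inj v); rewrite e ofs_self. Qed.

Lemma S_domV v m : m * p = n - 1 -> dom ([set: 'I_n] :\ v) (Sset v m).
Proof.
move=> mp; apply: domI; first by apply: S_sub; rewrite mp.
move=> x xV; apply: S_cover; first by rewrite mp.
by rewrite ofs_pos //= mp; have := ofs_lt v x; lia.
Qed.

Lemma S_cardV v m : m * p = n - 1 -> #|Sset v m| = m.
Proof.
move=> mp; have := lower (S_domV v mp); rewrite card_Vv -mp leq_mul2r addn1 /= => h.
by apply/eqP; rewrite eqn_leq S_card h.
Qed.

Lemma S_eds v m : m * p = n - 1 -> efficient_dominating (circ_adj n k) ([set: 'I_n] :\ v) (Sset v m).
Proof.
move=> mp; have [c1 _] := tight (S_domV v mp) (etrans (card_Vv v) (esym (etrans (congr1 (muln^~ p) (S_cardV v mp)) mp))).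
have sub : Sset v m \subset [set: 'I_n] :\ v by apply: S_sub; rewrite mp.
apply/andP; split => //; apply/forall_inP => x xV.
have -> : cnbhd (circ_adj n k) ([set: 'I_n] :\ v) x :&: Sset v m = [set u in Sset v m | cl x u].
  apply/setP => u; rewrite !inE; case uS: (u \in Sset v m); last by rewrite !andbF.
  by move/subsetP: sub => /(_ _ uS); rewrite !inE andbT => -> /=; rewrite andbT.
by rewrite c1.
Qed.

Lemma xx1 (x : nat) : x = 1 + x -> False. Proof. lia. Qed.

Lemma fromV v t : 0 < t < n -> fromofs v t \in [set: 'I_n] :\ v.
Proof.
move=> ht; rewrite !inE andbT; apply/eqP => e.
by have := ofs_from v (proj2 (andP ht)); rewrite e ofs_self; lia.
Qed.

Lemma S_uniq v m D : m * p = n - 1 -> dom ([set: 'I_n] :\ v) D -> #|D| = m -> D = Sset v m.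
Proof.
set V' := [set: 'I_n] :\ v.
move=> mp dD cD.
have [c1 d1] := tight dD (etrans (card_Vv v) (esym (etrans (congr1 (muln^~ p) cD) mp))).
have rng : forall u, u \in D -> k < ofs v u /\ ofs v u + k < n.
  move=> u uD; have ncl : ~~ cl u v.
    apply/negP => cuv; have := d1 u uD.
    have -> : [set x in V' | cl u x] = N u :\ v by apply/setP => x; rewrite !inE andbT.
    by have := cardsD1 v (N u); rewrite card_N inE cuv /= => ->; apply: xx1.
  move: ncl; rewrite (cl_ofs v) ofs_self /cdk; have := ofs_lt v u; lia.
have two : forall z u u', z \in V' -> u \in D -> u' \in D -> u != u' -> cl z u -> cl z u' -> False.
  move=> z u u' zV uD u'D ne cu cu'; have := c1 z zV.
  have : #|[set u; u']| <= #|[set w in D | cl z w]|.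
    by apply: subset_leq_card; apply/subsetP => w; rewrite !inE => /orP [] /eqP ->; rewrite ?uD ?u'D.
  by rewrite cards2 ne => h e; move: h; rewrite e.
have dm : forall x, x \in V' -> exists2 u, u \in D & cl x u.
  move=> x xV; have h1 : 0 < #|[set u in D | cl x u]| by rewrite c1.
  by case/card_gt0P: h1 => u; rewrite inE => /andP [uD cu]; exists u.
have succ : forall u, u \in D -> ofs v u + k + 1 <= n - 1 -> exists2 u', u' \in D & ofs v u' = ofs v u + p.
  move=> u uD hb; set a := ofs v u in hb *.
  have [r1 r2] := rng _ uD.
  have hy : 0 < a + k + 1 < n by lia.
  have [u' u'D cy] := dm _ (fromV v hy).
  exists u' => //; have [r1' r2'] := rng _ u'D.
  move: cy; rewrite (cl_ofs v) ofs_from; last by lia.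
  move=> cy; apply/eqP; apply/negP => ne.
  have hz : 0 < a + k < n by lia.
  have hzl : a + k < n by lia.
  apply: (two (fromofs v (a + k)) u u' (fromV v hz) uD u'D).
  - apply/eqP => e; move: cy; rewrite -e -/a /cdk. lia.
  - rewrite (cl_ofs v) ofs_from // -/a /cdk. lia.
  - rewrite (cl_ofs v) ofs_from //; move: cy ne; rewrite /cdk. lia.
have anchor : fromofs v k.+1 \in D.
  have hy : 0 < 1 < n by lia.
  have [u0 u0D cy] := dm _ (fromV v hy).
  have [r1 r2] := rng _ u0D.
  move: cy; rewrite (cl_ofs v) ofs_from; last by lia.
  move=> cy; rewrite -(from_ofs v u0) in u0D.
  have -> : k.+1 = ofs v u0 by move: cy; rewrite /cdk; lia.
  exact: u0D.
have chain : forall j, j < m -> fromofs v (k.+1 + j * p) \in D.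
  elim => [_|j IH jm]; first by rewrite mul0n addn0.
  have := IH (ltnW jm); set u := fromofs v _ => uD.
  have b := jp_bound jm; rewrite mulSn in b.
  have ou : ofs v u = k.+1 + j * p.
    by apply: ofs_from; move: (j * p) (m * p) b mp => X M; lia.
  have hb : ofs v u + k + 1 <= n - 1 by rewrite ou; move: (j * p) (m * p) b mp => X M; lia.
  have [u' u'D e] := succ u uD hb.
  have -> : fromofs v (k.+1 + j.+1 * p) = u'.
    by rewrite -(from_ofs v u') e ou mulSn; congr fromofs; lia.
  exact: u'D.
apply/eqP; rewrite eq_sym eqEcard cD (S_cardV v mp) leqnn andbT.
by apply/subsetP => x /imsetP [j _ ->]; apply: chain.
Qed.

Lemma noEDS : p %| n - 1 -> ~~ has_EDS (circ_adj n k) [set: 'I_n].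
Proof.
move=> dv; apply/negP => /existsP [D /andP [_ /forall_inP H]].
have c : forall x, #|[set u in D | cl x u]| = 1.
  move=> x; have := H x (in_setT x).
  have -> : cnbhd (circ_adj n k) [set: 'I_n] x :&: D = [set u in D | cl x u].
    by apply/setP => u; rewrite !inE andbC.
  by move/eqP.
have := dcount [set: 'I_n] D.
have -> : \sum_(x in [set: 'I_n]) #|[set u in D | cl x u]| = n.
  by rewrite (eq_bigr (fun _ => 1)) ?sum1_card ?cardsT ?card_ord // => x _; rewrite c.
have -> : \sum_(u in D) #|[set x in [set: 'I_n] | cl u x]| = #|D| * p.
  rewrite -sum_nat_const; apply: eq_bigr => u _; rewrite -(card_N u); apply: eq_card => x.
  by rewrite !inE.
move=> e; have dn : p %| n by rewrite e dvdn_mull.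
have := dvdn_sub dn dv; rewrite (_ : n - (n - 1) = 1); last by lia.
rewrite dvdn1; lia.
Qed.

Definition v0 : 'I_n := Ordinal n_gt0.

Lemma lowm (V D : {set 'I_n}) m : dom V D -> m * p < #|V| -> m.+1 <= #|D|.
Proof.
move=> dD lt; have hl := lower dD; rewrite ltnNge; apply/negP => h.
have := leq_mul h (leqnn p); move: (#|D| * p) (m * p) lt hl => X Y; lia.
Qed.

Lemma full_two m : m * p = n - 1 ->
  gamma (circ_adj n k) [set: 'I_n] = m.+1 /\ 2 <= #|gamma_sets (circ_adj n k) [set: 'I_n]|.
Proof.
move=> mp; set S0 := Sset v0 m; set y1 := fromofs v0 1.
have mp' : m * p <= n - 1 by rewrite mp.
have sub := S_sub v0 mp'.
have o1 : ofs v0 y1 = 1 by apply: ofs_from; lia.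
have low : forall D, dom [set: 'I_n] D -> m.+1 <= #|D|.
  by move=> D dD; apply: lowm dD _; rewrite cardsT card_ord mp; lia.
have domS : forall y, cl v0 y -> dom [set: 'I_n] (y |: S0).
  move=> y cy; apply: domI; first exact: subsetT.
  move=> x _; case: (eqVneq x v0) => [->|xv].
    by exists y; rewrite ?setU11.
  have [u uS cu] : exists2 u, u \in S0 & cl x u.
    apply: S_cover => //; rewrite ofs_pos ?mp; first by have := ofs_lt v0 x; lia.
    by rewrite !inE xv.
  by exists u => //; rewrite setU1r.
have cardS : forall y, cl v0 y -> #|y |: S0| = m.+1.
  move=> y cy; apply/eqP; rewrite eqn_leq low ?domS // andbT cardsU1.
  by case: (y \notin S0); rewrite ?add1n ?add0n ?ltnS; [|apply: leqW]; exact: S_card.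
have c0 : cl v0 v0 := cl_refl v0.
have c1 : cl v0 y1 by rewrite (cl_ofs v0) ofs_self o1 /cdk; lia.
split; first exact: gammaE (domS _ c0) (cardS _ c0) low.
apply: (gsets2 (domS _ c0) (domS _ c1) (cardS _ c0) (cardS _ c1)) => //.
apply/eqP => e; have : v0 \in y1 |: S0 by rewrite -e setU11.
rewrite !inE => /orP [/eqP h|h].
  by move: o1; rewrite -h ofs_self.
by move/subsetP: sub => /(_ _ h); rewrite !inE eqxx.
Qed.

Lemma nondiv_two : ~~ (p %| n - 1) -> 2 <= #|gamma_sets (circ_adj n k) ([set: 'I_n] :\ v0)|.
Proof.
move=> nd; set m := (n - 1) %/ p; set r := (n - 1) %% p.
have e := divn_eq (n - 1) p; rewrite -/m -/r in e.
have r0 : 0 < r by rewrite lt0n -/r; move: nd; rewrite /dvdn.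
have rp : r < p by apply: ltn_pmod; rewrite addn1.
have mp' : m * p <= n - 1 by lia.
set S0 := Sset v0 m; set V' := [set: 'I_n] :\ v0.
have sub := S_sub v0 mp'.
have low : forall D, dom V' D -> m.+1 <= #|D|.
  by move=> D dD; apply: lowm dD _; rewrite card_Vv; move: (m * p) e r0 => X; lia.
have domS : forall t, n - 1 - k <= t <= n - k -> 0 < t < n -> dom V' (fromofs v0 t |: S0).
  move=> t ht ht'; apply: domI.
    by rewrite subUset sub1set fromV // sub.
  move=> x xV; have xp := ofs_pos xV; have xl := ofs_lt v0 x.
  case: (leqP (ofs v0 x) (m * p)) => hx.
    have [u uS cu] : exists2 u, u \in S0 & cl x u by apply: S_cover => //; rewrite xp.
    by exists u => //; rewrite setU1r.
  exists (fromofs v0 t); first by rewrite setU11.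
  rewrite (cl_ofs v0) ofs_from; last by lia.
  rewrite /cdk; move: (m * p) e hx => X; lia.
have cardS : forall t, n - 1 - k <= t <= n - k -> 0 < t < n -> #|fromofs v0 t |: S0| = m.+1.
  move=> t ht ht'; apply/eqP; rewrite eqn_leq low ?domS // andbT cardsU1.
  by case: (_ \notin S0); rewrite ?add1n ?add0n ?ltnS; [|apply: leqW]; exact: S_card.
have ha : n - 1 - k <= n - 1 - k <= n - k by lia.
have ha' : 0 < n - 1 - k < n by lia.
have hb : n - 1 - k <= n - k <= n - k by lia.
have hb' : 0 < n - k < n by lia.
apply: (gsets2 (domS _ ha ha') (domS _ hb hb') (cardS _ ha ha') (cardS _ hb hb')) => //.
apply/eqP => eq; have : fromofs v0 (n - 1 - k) \in fromofs v0 (n - k) |: S0 by rewrite -eq setU11.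
rewrite !inE => /orP [/eqP h|h].
  have := congr1 (ofs v0) h; rewrite !ofs_from; lia.
have := cardS _ ha ha'; rewrite cardsU1 h /= add0n => e1.
by have := S_card v0 m; rewrite -/S0 e1 ltnn.
Qed.

End Circ.

Theorem proposition3p19 (n k : nat) :
  4 <= n -> 1 <= k -> k < n./2 ->
  (hypo_unique (circ_adj n k) [set: 'I_n] <-> (k.*2.+1 %| n.-1)) /\
  ((k.*2.+1 %| n.-1) ->
     n = (maxdeg (circ_adj n k) [set: 'I_n]).+1 *
           (gamma (circ_adj n k) [set: 'I_n]).-1 + 1 /\
     hypo_efficient (circ_adj n k) [set: 'I_n]).
Proof.
move=> n4 k1 kn.
have hkn : k + k + 2 <= n.
  move: kn; rewrite ltnNge leq_half_double -addnn; lia.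
have ep : k.*2.+1 = k + k + 1 by rewrite -addnn addn1.
have en : n.-1 = n - 1 by lia.
rewrite ep en.
have divpart : k + k + 1 %| n - 1 -> exists2 m, m * (k + k + 1) = n - 1 &
    gamma (circ_adj n k) [set: 'I_n] = m.+1 /\ 2 <= #|gamma_sets (circ_adj n k) [set: 'I_n]|.
  move=> dv; exists ((n - 1) %/ (k + k + 1)); first by rewrite (divnK dv).
  by apply: full_two; rewrite ?(divnK dv).
split.
  split.
    case=> _ H; apply/negPn/negP => nd.
    by have := nondiv_two k1 hkn nd; rewrite (H _ (in_setT _)).
  move=> dv; have [m mp [g two]] := divpart dv; split => // v _.
  apply: gsets1 (S_domV k1 hkn v mp) _ _.
    by move=> D dD; rewrite (S_cardV k1 hkn v mp); have := lower k1 hkn dD;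
       rewrite (card_Vv k1 hkn v) -mp leq_mul2r addn1.
  move=> D dD cD; apply: (S_uniq k1 hkn mp dD); by rewrite cD (S_cardV k1 hkn v mp).
move=> dv; have [m mp [g two]] := divpart dv.
rewrite (maxdegE k1 hkn) g /=; split.
  rewrite mulnC; lia.
split; first exact: noEDS.
move=> v _; apply/existsP; exists (Sset k1 hkn v m); exact: S_eds.
Qed.
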